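(* Let $A$ be an MV-algebra, $d$ a $(\odot,\vee)$-derivation on $A$ and $a\in A$. If $d(a)\in\mathbf{B}(A)$, then $d(d(a))=d(a)$.
   Context: An MV-algebra is an algebra $(A,\oplus,{}^*,0)$ of type $(2,1,0)$ satisfying: $x\oplus(y\oplus z)=(x\oplus y)\oplus z$, $x\oplus y=y\oplus x$, $x\oplus 0=x$, $x^{**}=x$, $x\oplus 0^*=0^*$, $(x^*\oplus y)^*\oplus y=(y^*\oplus x)^*\oplus x$. Put $1=0^*$ and $x\odot y=(x^*\oplus y^* )^*$. The natural order is $x\le y$ iff $x^*\oplus y=1$, with lattice operations $x\vee y=(x\odot y^* )\oplus y$, $x\wedge y=x\odot(x^*\oplus y)$. The Boolean center is $\mathbf{B}(A)=\{x\in A: x\oplus x=x\}$. A $(\odot,\vee)$-derivation on $A$ is a map $d:A\to A$ with $d(x\odot y)=(d(x)\odot y)\vee(x\odot d(y))$ for all $x,y\in A$. *)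

(* Defs.v *)
Record MVAlgebra := {
  mv_car :> Type;
  mv_oplus : mv_car -> mv_car -> mv_car;
  mv_neg : mv_car -> mv_car;
  mv_zero : mv_car;
  mv_assoc : forall x y z, mv_oplus x (mv_oplus y z) = mv_oplus (mv_oplus x y) z;
  mv_comm : forall x y, mv_oplus x y = mv_oplus y x;
  mv_zero_r : forall x, mv_oplus x mv_zero = x;
  mv_negK : forall x, mv_neg (mv_neg x) = x;
  mv_one_abs : forall x, mv_oplus x (mv_neg mv_zero) = mv_neg mv_zero;
  mv_luk : forall x y,
    mv_oplus (mv_neg (mv_oplus (mv_neg x) y)) y
    = mv_oplus (mv_neg (mv_oplus (mv_neg y) x)) x
}.

Arguments mv_oplus {m} _ _.
Arguments mv_neg {m} _.
Arguments mv_zero {m}.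

Section Ops.
Variable A : MVAlgebra.

Definition mv_one : A := mv_neg mv_zero.
Definition mv_odot (x y : A) : A := mv_neg (mv_oplus (mv_neg x) (mv_neg y)).
Definition mv_le (x y : A) : Prop := mv_oplus (mv_neg x) y = mv_one.
Definition mv_join (x y : A) : A := mv_oplus (mv_odot x (mv_neg y)) y.
Definition mv_meet (x y : A) : A := mv_odot x (mv_oplus (mv_neg x) y).

Definition in_boolean_center (x : A) : Prop := mv_oplus x x = x.

Definition is_odot_join_derivation (d : A -> A) : Prop :=
  forall x y : A, d (mv_odot x y) = mv_join (mv_odot (d x) y) (mv_odot x (d y)).
End Ops.

Arguments mv_one {A}.
Arguments mv_odot {A} _ _.
Arguments mv_le {A} _ _.
Arguments mv_join {A} _ _.
Arguments mv_meet {A} _ _.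
Arguments in_boolean_center {A} _.
Arguments is_odot_join_derivation {A} _.

(* Main.v *)
Require Import Defs.

Section MV.
Variable A : MVAlgebra.
Local Notation "x ++ y" := (@mv_oplus A x y).
Local Notation "x ^*" := (@mv_neg A x) (at level 30).
Local Notation z := (@mv_zero A).

Lemma l0l (x : A) : z ++ x = x.
Proof. rewrite mv_comm. apply mv_zero_r. Qed.

Lemma lcompl (x : A) : x^* ++ x = mv_one.
Proof.
  pose proof (mv_luk A (mv_one) x) as H. unfold mv_one in *.
  rewrite mv_negK, l0l in H. rewrite H. apply mv_one_abs.
Qed.

Lemma lup (x y : A) : mv_le x (x ++ y).
Proof.
  unfold mv_le. rewrite mv_assoc, lcompl. unfold mv_one.
  rewrite mv_comm. apply mv_one_abs.
Qed.

Lemma lantisym (x y : A) : mv_le x y -> mv_le y x -> x = y.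
Proof.
  unfold mv_le, mv_one; intros H1 H2.
  pose proof (mv_luk A x y) as H. rewrite H1, H2, !mv_negK, !l0l in H. auto.
Qed.

Lemma ldec (x y : A) : mv_le x y -> y = x ++ (y^* ++ x)^*.
Proof.
  unfold mv_le, mv_one; intros H1.
  pose proof (mv_luk A x y) as H. rewrite H1, mv_negK, l0l in H.
  rewrite mv_comm. exact H.
Qed.

Lemma lmono (x y w : A) : mv_le x y -> mv_le (x ++ w) (y ++ w).
Proof.
  intros H. set (c := (y^* ++ x)^*). rewrite (ldec x y H). fold c.
  replace ((x ++ c) ++ w) with ((x ++ w) ++ c). apply lup.
  rewrite <- !mv_assoc, (mv_comm A w c). reflexivity.
Qed.

Lemma lsum0 (x y : A) : x ++ y = z -> y = z.
Proof.
  intros H. pose proof (lup y x) as H1. rewrite mv_comm, H in H1.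
  unfold mv_le, mv_one in H1. rewrite mv_zero_r in H1.
  rewrite <- (mv_negK A y), H1, mv_negK. reflexivity.
Qed.

Lemma lodot0 (y : A) : mv_odot z y = z.
Proof.
  unfold mv_odot. rewrite mv_comm, mv_one_abs, mv_negK. reflexivity.
Qed.

Lemma lodot1 (y : A) : mv_odot y mv_one = y.
Proof.
  unfold mv_odot, mv_one. rewrite mv_negK, mv_zero_r, mv_negK. reflexivity.
Qed.

Lemma ljoin_r (u v : A) : mv_le u (mv_join u v).
Proof.
  unfold mv_join, mv_odot. rewrite mv_negK, mv_luk, mv_comm. apply lup.
Qed.

Lemma ld0 (d : A -> A) : is_odot_join_derivation d -> d z = z.
Proof.
  intros D. pose proof (D z z) as H. rewrite !lodot0 in H.
  assert (E : mv_odot (d z) z = z).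
  { unfold mv_odot. rewrite mv_one_abs, mv_negK. reflexivity. }
  rewrite E in H. rewrite H. unfold mv_join.
  rewrite mv_zero_r. apply lodot0.
Qed.

Lemma ldle (d : A -> A) (x : A) : is_odot_join_derivation d -> mv_le (d x) x.
Proof.
  intros D. pose proof (D x (x^*)) as H.
  assert (E : mv_odot x (x^*) = z).
  { unfold mv_odot. rewrite mv_negK, lcompl. unfold mv_one. apply mv_negK. }
  rewrite E, ld0 in H by auto. unfold mv_join in H. symmetry in H.
  pose proof (lsum0 _ _ H) as Hq. rewrite Hq in H.
  change (z^*) with (@mv_one A) in H. rewrite lodot1, mv_zero_r in H.
  unfold mv_odot in H. rewrite mv_negK in H.
  unfold mv_le. rewrite <- (mv_negK A (_ ++ _)), H. reflexivity.
Qed.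

Lemma lbool_odot (a b : A) : mv_le b a -> b ++ b = b -> mv_odot a b = b.
Proof.
  intros Hba Hb.
  assert (Hb' : b^* ++ b^* = b^*).
  { apply lantisym.
    - pose proof (mv_luk A (b^*) b) as H. rewrite mv_negK, Hb, lcompl in H.
      unfold mv_le. symmetry. exact H.
    - apply lup. }
  assert (Hab : mv_le (a^*) (b^*)).
  { unfold mv_le. rewrite mv_negK, mv_comm. exact Hba. }
  assert (E : a^* ++ b^* = b^*).
  { apply lantisym.
    - pose proof (lmono _ _ (b^*) Hab) as M. rewrite Hb' in M. exact M.
    - rewrite mv_comm. apply lup. }
  unfold mv_odot. rewrite E. apply mv_negK.
Qed.

End MV.

Theorem proposition3p8 (A : MVAlgebra) (d : A -> A) (a : A) :
  is_odot_join_derivation d -> in_boolean_center (d a) -> d (d a) = d a.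
Proof.
  intros D Hb. unfold in_boolean_center in Hb.
  pose proof (ldle A d a D) as Hba.
  pose proof (lbool_odot A a (d a) Hba Hb) as E.
  apply lantisym.
  - apply ldle; exact D.
  - assert (R : mv_le (d a) (d a)). { unfold mv_le. apply lcompl. }
    pose proof (lbool_odot A (d a) (d a) R Hb) as E2.
    pose proof (D a (d a)) as H. rewrite E, E2 in H. rewrite H. apply ljoin_r.
Qed.
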